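(* There is an absolute constant $C>0$ such that the following holds. Let $\langle\mathcal X,\mathcal C,d,\ell,(x_1,\dots,x_n)\rangle$ be a multiple facility location instance with $\mathcal X=[0,1]$ and $d(x,y)=|x-y|$, let $\epsilon\in(0,1)$, and let $k$ be an integer with $C/\epsilon^2\le k\le n$. Then $$\mathbb E_{S\sim\mathcal U_{k,n}}\big[\textsc{Social-Cost}(\overline y(S))\big]\le\textsc{Social-Opt}+\epsilon .$$
   Context: A multiple facility location instance $\langle\mathcal X,\mathcal C,d,\ell,(x_1,\dots,x_n)\rangle$ consists of a metric space $(\mathcal X,d)$, candidate locations $\mathcal C\subseteq\mathcal X$, a number $\ell\ge1$ of facilities and agent locations $x_1,\dots,x_n\in\mathcal X$. For $y=(y_1,\dots,y_\ell)\in\mathcal C^\ell$, agent $i$'s cost is $\mathrm{Cost}_i(y)=\min_{j\in[\ell]}d(x_i,y_j)$; $\textsc{Social-Cost}(y)=\frac1n\sum_i\mathrm{Cost}_i(y)$, $\textsc{Social-Opt}=\min_{y\in\mathcal C^\ell}\textsc{Social-Cost}(y)$, $\textsc{Panel-Cost}(y,S)=\frac1k\sum_{i\in S}\mathrm{Cost}_i(y)$, and $\overline y(S)\in\arg\min_{y\in\mathcal C^\ell}\textsc{Panel-Cost}(y,S)$ (minimizers assumed to exist). $\mathcal U_{k,n}$ is the uniform distribution over size-$k$ subsets of $[n]$. *)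

(* Defs.v *)
From HB Require Import structures.
From mathcomp Require Import all_boot all_order all_algebra.
From mathcomp Require Import Rstruct.
Set Implicit Arguments. Unset Strict Implicit. Unset Printing Implicit Defensive.
Import Order.TTheory GRing.Theory Num.Theory.
Local Open Scope ring_scope.
Notation real := Rdefinitions.R.

(* Facilities are indexed by 'I_l.+1, i.e. there are ell = l+1 >= 1 facilities. *)

Definition agent_cost (l : nat) (a : real) (y : 'I_l.+1 -> real) : real :=
  \big[Num.min/ `|a - y ord0|]_(j < l.+1) `|a - y j|.

Definition social_cost (n l : nat) (x : 'I_n -> real) (y : 'I_l.+1 -> real) : real :=
  (n%:R)^-1 * \sum_(i < n) agent_cost (x i) y.

Definition panel_cost (n l k : nat) (x : 'I_n -> real) (y : 'I_l.+1 -> real)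
  (S : {set 'I_n}) : real :=
  (k%:R)^-1 * \sum_(i in S) agent_cost (x i) y.

Definition in_cand (l : nat) (Cand : real -> Prop) (y : 'I_l.+1 -> real) : Prop :=
  forall j, Cand (y j).

Definition unif_expect (n k : nat) (f : {set 'I_n} -> real) : real :=
  ('C(n, k)%:R)^-1 * \sum_(S : {set 'I_n} | #|S| == k) f S.

(* Main.v *)
Require Import Defs.
From HB Require Import structures.
From mathcomp Require Import all_boot all_order all_algebra.
From mathcomp Require Import Rstruct ring lra zify.
Set Implicit Arguments. Unset Strict Implicit. Unset Printing Implicit Defensive.
Import Order.TTheory GRing.Theory Num.Theory.
Local Open Scope ring_scope.


Lemma count_sup (T : finType) (B : {set T}) k : (#|B| <= k)%N ->
 #|[set S : {set T} | (#|S| == k) && (B \subset S)]| = 'C(#|T| - #|B|, k - #|B|).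
Proof.
move=> hBk.
have -> : [set S : {set T} | (#|S| == k) && (B \subset S)] =
   (fun A => A :|: B) @: [set A : {set T} | A \subset ~: B & #|A| == (k - #|B|)%N].
  apply/setP => S; rewrite inE; apply/andP/imsetP.
  - move=> [/eqP hk hB]; exists (S :\: B).
      rewrite inE; apply/andP; split; first by rewrite setDE subsetIr.
      by rewrite cardsD (setIidPr hB) hk.
    apply/setP => z; rewrite !inE; case: (boolP (z \in B)) => zB /=.

      by rewrite (subsetP hB z zB).
    by rewrite orbF.
  - move=> [A]; rewrite inE => /andP[hA /eqP hc] ->; split; last exact: subsetUr.
    rewrite cardsU hc.
    have -> : A :&: B = set0.
      apply/setP => z; rewrite !inE; apply/negbTE; apply/negP => /andP[zA zB].
      by move: (subsetP hA z zA); rewrite inE zB.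
    by rewrite cards0 subn0 subnK.
rewrite card_in_imset; last first.
  move=> A1 A2; rewrite !inE => /andP[h1 _] /andP[h2 _] e.
  have dA (A : {set T}) : A \subset ~: B -> (A :|: B) :\: B = A.
    move=> hA; apply/setP => z; rewrite !inE; case: (boolP (z \in A)) => zA /=.
      by move: (subsetP hA z zA); rewrite inE => ->.
    by rewrite andbC; case: (z \in B).
  by rewrite -(dA _ h1) e dA.
rewrite cards_draws; congr 'C(_, _).
by rewrite -(cardsC B) addKn.
Qed.

Definition Mc n k (i j : 'I_n) :=
  #|[set S : {set 'I_n} | (#|S| == k) && ((i \in S) && (j \in S))]|.

Lemma M1 n k (i : 'I_n) : (0 < k)%N -> (n * Mc k i i = k * 'C(n, k))%N.
Proof.
move=> k0.
have -> : Mc k i i = #|[set S : {set 'I_n} | (#|S| == k) && ([set i] \subset S)]|.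
  by apply: eq_card => S; rewrite !inE sub1set andbb.
rewrite count_sup cards1 ?card_ord //.
have := mul_bin_diag n (k - 1); rewrite subn1 prednK //.
by rewrite subn1.
Qed.

Lemma M2 n k (i j : 'I_n) : i != j ->
  (n * (n - 1) * Mc k i j <= k * (k - 1) * 'C(n, k))%N.
Proof.
move=> ij.
have -> : Mc k i j = #|[set S : {set 'I_n} | (#|S| == k) && ([set i; j] \subset S)]|.
  by apply: eq_card => S; rewrite !inE subUset !sub1set.
have c2 : #|[set i; j]| = 2%N by rewrite cards2 ij.
case: (ltnP k 2) => hk.
  rewrite (_ : #|_| = 0%N) ?muln0 //; apply: eq_card0 => S; rewrite !inE.
  apply/negP => /andP[/eqP hS hsub]; have := subset_leq_card hsub.
  by rewrite c2 hS; move: hk; case: k {hS} => [|[|]].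
rewrite count_sup c2 ?card_ord //.
have e1 := mul_bin_diag (n - 1) (k - 2).
have e2 := mul_bin_diag n (k - 1).
move: e1 e2; rewrite (_ : (k - 2).+1 = k - 1)%N; last by lia.
rewrite (_ : (k - 1).+1 = k)%N; last by lia.
rewrite (_ : (n - 1).-1 = n - 2)%N; last by lia.
rewrite (_ : n.-1 = n - 1)%N; last by lia.
move=> e1 e2.
rewrite -mulnA e1 mulnCA e2; lia.
Qed.


Lemma sum_ind (T : finType) (P b : pred T) :
  \sum_(S | P S) ((b S)%:R : real) = (#|[set S | P S && b S]|)%:R.
Proof.
transitivity (\sum_(S | P S && b S) (1 : real)).
  rewrite big_mkcondr /=; apply: eq_bigr => S _; by case: (b S).
rewrite sumr_const; congr (_%:R); apply: eq_card => S; by rewrite inE.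
Qed.

Lemma natr_ind_mul (b1 b2 : bool) : (b1%:R * b2%:R : real) = (b1 && b2)%:R.
Proof. by case: b1; case: b2; rewrite /= ?mul1r ?mul0r. Qed.
Lemma nat_final n a k K X : (2 <= n)%N -> (a <= n)%N ->
  (n * (n - 1) * X <= a * (a - 1) * (k * (k - 1) * K))%N ->
  (n * n * X <= a * a * (k * k * K))%N.
Proof.
move=> n2 an h.
have n1 : (0 < n - 1)%N by lia.
rewrite -(leq_pmul2l n1).
have h1 : ((n - 1) * (n * n * X) = n * (n * (n - 1) * X))%N by ring.
rewrite h1.
apply: (leq_trans (leq_mul (leqnn n) h)).
have h2 : (n * (a - 1) <= (n - 1) * a)%N by nia.
have h3 : (k * (k - 1) <= k * k)%N by nia.
have h4 : (n * (a * (a - 1) * (k * (k - 1) * K)) = (n * (a - 1)) * (a * (k * (k - 1)) * K))%N by ring.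
have h5 : ((n - 1) * (a * a * (k * k * K)) = ((n - 1) * a) * (a * (k * k) * K))%N by ring.
rewrite h4 h5; apply: leq_mul => //; apply: leq_mul => //; apply: leq_mul => //.
Qed.

Lemma pair_bound n k (A : {set 'I_n}) : (#|A| <= n)%N ->
  (n * n * (\sum_(i in A) \sum_(j in A | j != i) Mc k i j)
     <= #|A| * #|A| * (k * k * 'C(n, k)))%N.
Proof.
move=> an.
case: (ltnP n 2) => hn.
  rewrite (_ : \sum_(i in A) _ = 0)%N ?muln0 //.
  apply: big1 => i _; apply: big_pred0 => j.
  apply/negbTE; rewrite negb_and negbK; apply/orP; right; apply/eqP/val_inj.
  by move: (ltn_ord i) (ltn_ord j) hn; case: n {A an} i j => [|[|]] // [[|]//] ? [[|]//] ?.
apply: nat_final => //.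
rewrite big_distrr /=.
apply: (@leq_trans (\sum_(i in A) \sum_(j in A | j != i) (k*(k-1)*'C(n,k)))%N).
  apply: leq_sum => i _; rewrite big_distrr /=; apply: leq_sum => j /andP[_ ji].
  by apply: M2; rewrite eq_sym.
have e : forall i, i \in A ->
   (\sum_(j in A | j != i) (k*(k-1)*'C(n,k)) = (#|A| - 1) * (k*(k-1)*'C(n,k)))%N.
  move=> i iA; rewrite (eq_bigl (fun j => j \in A :\ i)); last by move=> j; rewrite !inE andbC.
  rewrite sum_nat_const (cardsD1 i A) iA /=; lia.
by rewrite (eq_bigr _ e) sum_nat_const mulnA.
Qed.


Lemma ac_le l a (y : 'I_l.+1 -> real) j : agent_cost a y <= `|a - y j|.
Proof. by rewrite /agent_cost (bigD1 j) //= ge_min lexx. Qed.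

Lemma ac_att l a (y : 'I_l.+1 -> real) : exists j, agent_cost a y = `|a - y j|.
Proof.
rewrite /agent_cost; apply: (big_ind (fun v => exists j, v = `|a - y j|)).
- by exists ord0.
- by move=> v w [j ->] [j' ->]; rewrite minEle; case: ifP => _; eexists.
- by move=> j _; exists j.
Qed.

Lemma ac_lip l a b (y : 'I_l.+1 -> real) :
  `|agent_cost a y - agent_cost b y| <= `|a - b|.
Proof.
have h : forall a b, agent_cost a y <= agent_cost b y + `|a - b|.
  move=> a' b'; have [j ->] := ac_att b' y; apply: le_trans (ac_le a' y j) _.
  by apply: le_trans (ler_distD b' _ _) _; rewrite [X in X <= _]addrC.
have h1 := h a b; have h2 := h b a; rewrite distrC in h2.
rewrite ler_norml; apply/andP; split; lra.
Qed.

Lemma abel (m F : nat -> real) N :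
  \sum_(j < N.+1) m j * F j =
  \sum_(j < N) (\sum_(t < j.+1) m t) * (F j - F j.+1) + (\sum_(t < N.+1) m t) * F N.
Proof.
elim: N => [|N IH]; first by rewrite !big_ord1 big_ord0 add0r.
rewrite big_ord_recr /= IH [in RHS]big_ord_recr /=.
rewrite [\sum_(t < N.+2) m t]big_ord_recr /=.
ring.
Qed.

Lemma abel_bound (m F v : nat -> real) N :
  \sum_(t < N.+1) m t = 0 ->
  (forall j, (j < N)%N -> `|F j - F j.+1| <= v j.+1 - v j) ->
  `|\sum_(j < N.+1) m j * F j| <= \sum_(j < N) `|\sum_(t < j.+1) m t| * (v j.+1 - v j).
Proof.
move=> h0 hF; rewrite abel h0 mul0r addr0.
apply: le_trans (ler_norm_sum _ _ _) _; apply: ler_sum => j _.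
by rewrite normrM; apply: ler_wpM2l => //; apply: hF.
Qed.
Definition mu n k (S : {set 'I_n}) (i : 'I_n) : real := (n%:R)^-1 - (i \in S)%:R / k%:R.

Lemma sum_const_draws n k (x : real) :
  \sum_(S : {set 'I_n} | #|S| == k) x = x * ('C(n, k))%:R.
Proof.
transitivity (\sum_(S : {set 'I_n} | #|S| == k) (x * (true%:R))).
  by apply: eq_bigr => S _; rewrite mulr1.
rewrite -mulr_sumr sum_ind; congr (_ * _%:R).
have -> : 'C(n, k) = 'C(#|'I_n|, k) by rewrite card_ord.
rewrite -card_draws; apply: eq_card => S; by rewrite !inE andbT.
Qed.

Lemma var_bound n k (A : {set 'I_n}) : (0 < k)%N -> (k <= n)%N ->
  \sum_(S : {set 'I_n} | #|S| == k) (\sum_(i in A) mu k S i) ^+ 2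
    <= ('C(n, k))%:R / k%:R.
Proof.
move=> k0 kn.
have n0 : (0 < n)%N by lia.
set a := #|A|.
have an : (a <= n)%N by rewrite /a; apply: leq_trans (max_card _) _; rewrite card_ord.
set K := 'C(n, k).
have nR : (n%:R : real) != 0 by rewrite pnatr_eq0 -lt0n.
have kR : (k%:R : real) != 0 by rewrite pnatr_eq0 -lt0n.
have nRp : (0 : real) < n%:R by rewrite ltr0n.
have kRp : (0 : real) < k%:R by rewrite ltr0n.
have KRp : (0 : real) <= K%:R by rewrite ler0n.
pose c (S : {set 'I_n}) := \sum_(i in A) (((i \in S)%:R) : real).
have e1 S : \sum_(i in A) mu k S i = a%:R / n%:R - c S / k%:R.
  rewrite /mu sumrB sumr_const -mulr_suml; congr (_ - _); by rewrite -[_ *+ #|A|]mulr_natr mulrC.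
have hM (i : 'I_n) : ((Mc k i i)%:R : real) = k%:R * K%:R / n%:R.
  have h := M1 i k0.
  have h' : (n%:R * (Mc k i i)%:R : real) = k%:R * K%:R by rewrite -!natrM h.
  by rewrite -h' mulrAC divff // mul1r.
have Sc : \sum_(S : {set 'I_n} | #|S| == k) c S = a%:R * (k%:R * K%:R / n%:R).
  rewrite /c exchange_big /=.
  transitivity (\sum_(i in A) (k%:R * K%:R / n%:R : real)).
    apply: eq_bigr => i _; rewrite sum_ind -(hM i); congr (_%:R); apply: eq_card => S.
    by rewrite !inE andbb.
  by rewrite sumr_const -[_ *+ #|A|]mulr_natl.
pose X := (\sum_(i in A) \sum_(j in A | j != i) Mc k i j)%N.
have Sc2 : \sum_(S : {set 'I_n} | #|S| == k) (c S) ^+ 2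
           = a%:R * (k%:R * K%:R / n%:R) + X%:R.
  have e S : c S ^+ 2 = \sum_(i in A) \sum_(j in A) (((i \in S) && (j \in S))%:R : real).
    rewrite expr2 mulr_suml; apply: eq_bigr => i _; rewrite mulr_sumr.
    by apply: eq_bigr => j _; apply: natr_ind_mul.
  rewrite (eq_bigr _ (fun S _ => e S)) exchange_big /=.
  under eq_bigr do rewrite exchange_big /=.
  transitivity (\sum_(i in A) ((Mc k i i)%:R + (\sum_(j in A | j != i) Mc k i j)%:R : real)).
    apply: eq_bigr => i iA; rewrite (bigD1 i iA) /= natr_sum; congr (_ + _).
      by rewrite sum_ind; congr (_%:R); apply: eq_card => S.
    by apply: eq_bigr => j _; rewrite sum_ind.
  rewrite big_split /= natr_sum; congr (_ + _).
  by rewrite (eq_bigr _ (fun i _ => hM i)) sumr_const -[_ *+ #|A|]mulr_natl.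
have XB : (n%:R * n%:R * X%:R : real) <= a%:R * a%:R * (k%:R * k%:R * K%:R).
  by rewrite -!natrM ler_nat; apply: pair_bound.
have E : \sum_(S : {set 'I_n} | #|S| == k) (\sum_(i in A) mu k S i) ^+ 2 =
   (a%:R / n%:R) ^+ 2 * K%:R - 2%:R * (a%:R / n%:R) * k%:R^-1 * (a%:R * (k%:R * K%:R / n%:R))
   + (k%:R ^+ 2)^-1 * (a%:R * (k%:R * K%:R / n%:R) + X%:R).
  rewrite -Sc2 -Sc mulr_sumr mulr_sumr -sum_const_draws -sumrB -big_split /=.
  apply: eq_bigr => S _; rewrite e1; field; by apply/andP.
rewrite E.
pose p : real := a%:R ^+ 2 * K%:R / n%:R ^+ 2.
have q1 : (k%:R ^+ 2)^-1 * X%:R <= p.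
  have -> : ((k%:R ^+ 2)^-1 * X%:R : real) = (n%:R * n%:R * X%:R) * (n%:R ^+ 2 * k%:R ^+ 2)^-1.
    by field; apply/andP.
  have -> : p = (a%:R * a%:R * (k%:R * k%:R * K%:R)) * (n%:R ^+ 2 * k%:R ^+ 2)^-1.
    by rewrite /p; field; apply/andP.
  by apply: ler_wpM2r => //; rewrite invr_ge0 ltW // mulr_gt0 // exprn_gt0.
have r1 : (a%:R * K%:R / (n%:R * k%:R) : real) <= K%:R / k%:R.
  have -> : (K%:R / k%:R : real) = (n%:R * K%:R) * (n%:R * k%:R)^-1.
    by field; apply/andP.
  apply: ler_wpM2r; first by rewrite invr_ge0 ltW // mulr_gt0.
  by apply: ler_wpM2r => //; rewrite ler_nat.
have -> : (a%:R / n%:R) ^+ 2 * K%:R - 2%:R * (a%:R / n%:R) * k%:R^-1 * (a%:R * (k%:R * K%:R / n%:R))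
   + (k%:R ^+ 2)^-1 * (a%:R * (k%:R * K%:R / n%:R) + X%:R)
   = - p + a%:R * K%:R / (n%:R * k%:R) + (k%:R ^+ 2)^-1 * X%:R.
  rewrite /p; field; by apply/andP.
lra.
Qed.

Lemma hM_lem n k (i : 'I_n) : (0 < k)%N -> (0 < n)%N ->
  ((Mc k i i)%:R : real) = k%:R * ('C(n, k))%:R / n%:R.
Proof.
move=> k0 n0.
have nR : (n%:R : real) != 0 by rewrite pnatr_eq0 -lt0n.
have h := M1 i k0.
have h' : (n%:R * (Mc k i i)%:R : real) = k%:R * ('C(n, k))%:R by rewrite -!natrM h.
by rewrite -h' mulrAC divff // mul1r.
Qed.

Lemma sum_in (n : nat) (S : {set 'I_n}) (f : 'I_n -> real) :
  \sum_(i in S) f i = \sum_i (i \in S)%:R * f i.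
Proof.
rewrite big_mkcond /=; apply: eq_bigr => i _; case: (i \in S); by rewrite ?mul1r ?mul0r.
Qed.

Lemma abs_le_quad (P e : real) : 0 < e -> `|P| <= P ^+ 2 / (2 * e) + e / 2.
Proof.
move=> e0.
have tP : `|P| ^+ 2 = P ^+ 2 by rewrite -normrX ger0_norm ?sqr_ge0.
have eq : P ^+ 2 / (2 * e) + e / 2 - `|P| = (`|P| - e) ^+ 2 / (2 * e).
  rewrite -tP; field; by rewrite lt0r_neq0.
have : 0 <= (`|P| - e) ^+ 2 / (2 * e).
  by apply: divr_ge0; [apply: sqr_ge0 | lra].
lra.
Qed.

Theorem theorem4p14 :
  exists C : real, 0 < C /\
  forall (n l k : nat) (x : 'I_n -> real) (Cand : real -> Prop) (eps : real)
    (ybar : {set 'I_n} -> 'I_l.+1 -> real) (ystar : 'I_l.+1 -> real),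
    (forall i, 0 <= x i <= 1) ->
    (forall c, Cand c -> 0 <= c <= 1) ->
    0 < eps < 1 ->
    C / eps ^+ 2 <= k%:R ->
    (k <= n)%N ->
    (* ybar S is a minimizer of Panel-Cost(., S) over C^ell, for every S of size k *)
    (forall S : {set 'I_n}, #|S| = k ->
       in_cand Cand (ybar S) /\
       forall y : 'I_l.+1 -> real, in_cand Cand y -> panel_cost k x (ybar S) S <= panel_cost k x y S) ->
    (* ystar attains Social-Opt *)
    in_cand Cand ystar ->
    (forall y : 'I_l.+1 -> real, in_cand Cand y -> social_cost x ystar <= social_cost x y) ->
    unif_expect k (fun S => social_cost x (ybar S)) <= social_cost x ystar + eps.
Proof.
exists 1; split; first exact: ltr01.
move=> n l k x Cand eps ybar ystar hx hC /andP[e0 e1] hk hkn hbar hstar_c hstar.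
have e2 : 0 < eps ^+ 2 by rewrite exprn_gt0.
have keps : 1 <= k%:R * eps ^+ 2 by rewrite -ler_pdivrMr.
have k0 : (0 < k)%N.
  rewrite lt0n; apply/negP => /eqP k0; rewrite k0 mul0r in keps; lra.
destruct n as [|N]; first by lia.
set K := 'C(N.+1, k).
have KRp : (0 : real) < K%:R by rewrite ltr0n bin_gt0.
have kRp : (0 : real) < k%:R by rewrite ltr0n.
have nRp : (0 : real) < N.+1%:R by rewrite ltr0n.
pose leT := fun a b : 'I_N.+1 => x a <= x b.
pose s := sort leT (enum 'I_N.+1).
have tot : total leT by move=> a b; exact: le_total.
have ss : sorted leT s := sort_sorted tot _.
have sz : size s = N.+1 by rewrite size_sort size_enum_ord.
have us : uniq s by rewrite sort_uniq enum_uniq.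
have mems : forall i, i \in s by move=> i; rewrite mem_sort mem_enum.
pose x0 : 'I_N.+1 := ord0.
pose v j := x (nth x0 s j).
have vmono : forall j, (j < N)%N -> v j <= v j.+1.
  move=> j hj; move/(sortedP x0): ss => h; apply: h; by rewrite sz.
have sumperm : forall g : 'I_N.+1 -> real,
    \sum_(i < N.+1) g i = \sum_(j < N.+1) g (nth x0 s j).
  move=> g; transitivity (\sum_(i <- s) g i).
    by rewrite [RHS]big_uniq //; apply: eq_bigl => i; rewrite mems.
  by rewrite (big_nth x0) sz big_mkord.
pose Pj S j := \sum_(t < j.+1) mu k S (nth x0 s t).
pose Aj j := [set i in take j.+1 s].
have hPA : forall S j, (j < N.+1)%N -> Pj S j = \sum_(i in Aj j) mu k S i.
  move=> S j hj; rewrite /Pj.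
  transitivity (\sum_(i <- take j.+1 s) mu k S i).
    rewrite (big_nth x0) size_takel ?sz // big_mkord; apply: eq_bigr => t _.
    by rewrite nth_take.
  rewrite big_uniq ?take_uniq //; apply: eq_bigl => i; by rewrite inE.
have EP : forall j, (j < N.+1)%N ->
    \sum_(S : {set 'I_N.+1} | #|S| == k) `|Pj S j| <= K%:R * eps.
  move=> j hj.
  have vb := var_bound (Aj j) k0 hkn.
  apply: le_trans (_ : _ <= \sum_(S : {set 'I_N.+1} | #|S| == k)
      ((\sum_(i in Aj j) mu k S i) ^+ 2 / (2 * eps) + eps / 2)) _.
    by apply: ler_sum => S _; rewrite hPA //; apply: abs_le_quad.
  rewrite big_split /= -mulr_suml sum_const_draws.
  have h1 : K%:R / k%:R <= K%:R * eps ^+ 2.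
    rewrite ler_pdivrMr // -mulrA; apply: ler_peMr; [exact: ltW | by rewrite mulrC].
  have h2 : (\sum_(S : {set 'I_N.+1} | #|S| == k) (\sum_(i in Aj j) mu k S i) ^+ 2) / (2 * eps)
            <= K%:R * eps ^+ 2 / (2 * eps).
    apply: ler_wpM2r; first by rewrite invr_ge0; lra.
    exact: le_trans vb h1.
  have h3 : K%:R * eps ^+ 2 / (2 * eps) = K%:R * eps / 2.
    field; by rewrite lt0r_neq0.
  have h4 : eps / 2 * K%:R = K%:R * eps / 2 by rewrite mulrC mulrA.
  lra.
have det : forall (S : {set 'I_N.+1}) (y : 'I_l.+1 -> real), #|S| = k ->
    social_cost x y - panel_cost k x y S <= \sum_(j < N) `|Pj S j| * (v j.+1 - v j).
  move=> S y hS.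
  have e : social_cost x y - panel_cost k x y S
           = \sum_(i < N.+1) mu k S i * agent_cost (x i) y.
    rewrite /social_cost /panel_cost sum_in /mu mulr_sumr mulr_sumr -sumrB.
    apply: eq_bigr => i _; ring.
  rewrite e sumperm; apply: le_trans (ler_norm _) _.
  apply: (abel_bound (m := fun j => mu k S (nth x0 s j))
                     (F := fun j => agent_cost (x (nth x0 s j)) y) (v := v)).
    rewrite -(sumperm (mu k S)) /mu sumrB sumr_const card_ord.
    have -> : \sum_(i < N.+1) ((i \in S)%:R / k%:R : real) = #|S|%:R / k%:R.
      rewrite -mulr_suml; congr (_ * _).
      transitivity (\sum_(i in S) (1 : real)); last by rewrite sumr_const.
      by rewrite [RHS]big_mkcond; apply: eq_bigr => i _; case: (i \in S).
    rewrite hS -[_ *+ N.+1]mulr_natr mulVf ?divff ?subrr //; by rewrite lt0r_neq0.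
  move=> j hj; apply: le_trans (ac_lip _ _ _) _.
  by rewrite distrC ger0_norm // subr_ge0; apply: vmono.
rewrite /unif_expect.
have hsum : \sum_(S : {set 'I_N.+1} | #|S| == k) social_cost x (ybar S)
   <= \sum_(S : {set 'I_N.+1} | #|S| == k)
        (\sum_(j < N) `|Pj S j| * (v j.+1 - v j) + panel_cost k x ystar S).
  apply: ler_sum => S /eqP hS; have [hc hmin] := hbar S hS.
  have := det S (ybar S) hS; have := hmin ystar hstar_c; lra.
have hpanel : \sum_(S : {set 'I_N.+1} | #|S| == k) panel_cost k x ystar S
              = K%:R * social_cost x ystar.
  rewrite /panel_cost /social_cost -mulr_sumr.
  under eq_bigr do rewrite sum_in.
  rewrite exchange_big /=.
  have -> : \sum_(i < N.+1) \sum_(S : {set 'I_N.+1} | #|S| == k)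
              (i \in S)%:R * agent_cost (x i) ystar
          = \sum_(i < N.+1) (k%:R * K%:R / N.+1%:R) * agent_cost (x i) ystar.
    apply: eq_bigr => i _; rewrite -mulr_suml sum_ind -(hM_lem i) //; congr (_%:R * _).
    by apply: eq_card => S; rewrite !inE andbb.
  rewrite -mulr_sumr; field; rewrite nat1r; apply/andP; split; by rewrite lt0r_neq0.
have hD : \sum_(S : {set 'I_N.+1} | #|S| == k) \sum_(j < N) `|Pj S j| * (v j.+1 - v j)
          <= K%:R * eps.
  rewrite exchange_big /=.
  apply: le_trans (_ : _ <= \sum_(j < N) (K%:R * eps) * (v j.+1 - v j)) _.
    apply: ler_sum => j _; rewrite -mulr_suml; apply: ler_wpM2r.
      by rewrite subr_ge0; apply: vmono.
    by apply: EP; have := ltn_ord j; lia.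
  rewrite -mulr_sumr -(big_mkord xpredT (fun j => v j.+1 - v j)) telescope_sumr //.
  have := hx (nth x0 s N); have := hx (nth x0 s 0); rewrite /v.
  move=> /andP[a1 a2] /andP[b1 b2].
  have : 0 <= K%:R * eps by apply: mulr_ge0; lra.
  move=> h; rewrite -[X in _ <= X]mulr1; apply: ler_wpM2l => //; lra.
have hfin : \sum_(S : {set 'I_N.+1} | #|S| == k) social_cost x (ybar S)
            <= K%:R * eps + K%:R * social_cost x ystar.
  apply: le_trans hsum _; rewrite big_split /= hpanel; lra.
have -> : social_cost x ystar + eps = K%:R^-1 * (K%:R * eps + K%:R * social_cost x ystar).
  field; by rewrite lt0r_neq0.
apply: ler_wpM2l => //; by rewrite invr_ge0 ltW.
Qed.
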